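(* For $n\ge1$ let $$\mathrm{Luc}_n(x)=\sum_{m=0}^{\lfloor n/2\rfloor}q^{\binom{m}{2}}\begin{bmatrix} n-m\\ m\end{bmatrix}_q\frac{[n]_q}{[n-m]_q}x^{n-2m}.$$ Then for every $n\ge1$, $$\det\left(\begin{bmatrix} 2i\\ i-j\end{bmatrix}_q x^2+\begin{bmatrix} 2i+2\\ i+1-j\end{bmatrix}_q\right)_{i,j=0}^{n-1}=\mathrm{Luc}_{2n}(x),$$ $$x\det\left(\begin{bmatrix} 2i+1\\ i-j\end{bmatrix}_q x^2+\begin{bmatrix} 2i+3\\ i+1-j\end{bmatrix}_q\right)_{i,j=0}^{n-1}=\mathrm{Luc}_{2n+1}(x).$$
   Context: Here $q$ is an indeterminate, $[m]_q=\frac{1-q^m}{1-q}$, and for integers $m\ge0$ and $j$ the $q$-binomial coefficient is $\begin{bmatrix} m\\ j\end{bmatrix}_q=\frac{(1-q^m)(1-q^{m-1})\cdots(1-q^{m-j+1})}{(1-q)(1-q^2)\cdots(1-q^j)}$ for $0\le j\le m$ and $0$ otherwise. *)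

(* Defs.v *)
From HB Require Import structures.
From mathcomp Require Import all_boot all_order all_algebra.
Set Implicit Arguments. Unset Strict Implicit. Unset Printing Implicit Defensive.
Import Order.TTheory GRing.Theory Num.Theory.
Local Open Scope ring_scope.

Definition K : fieldType := {fraction {poly int}}.

Definition qq : K := FracField.tofrac ('X : {poly int}).

Definition qint (q : K) (m : nat) : K := (1 - q ^+ m) / (1 - q).

Definition qbin (q : K) (m : nat) (j : int) : K :=
  match j with
  | Posz k => if (k <= m)%N then
                (\prod_(l < k) (1 - q ^+ (m - l)%N)) /
                (\prod_(l < k) (1 - q ^+ l.+1))
              else 0
  | Negz _ => 0
  end.

Definition Luc (n : nat) : {poly K} :=
  \sum_(m < (n./2).+1)
     (qq ^+ 'C(m, 2) * qbin qq (n - m) m * qint qq n / qint qq (n - m)) *: 'X^(n - 2 * m).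

Definition matA (n : nat) : 'M[{poly K}]_n :=
  \matrix_(i < n, j < n)
     ((qbin qq (2 * i) (i%:Z - j%:Z))%:P * 'X^2
      + (qbin qq (2 * i + 2) (i%:Z + 1 - j%:Z))%:P).

Definition matB (n : nat) : 'M[{poly K}]_n :=
  \matrix_(i < n, j < n)
     ((qbin qq (2 * i + 1) (i%:Z - j%:Z))%:P * 'X^2
      + (qbin qq (2 * i + 3) (i%:Z + 1 - j%:Z))%:P).

(* Main.v *)
Require Import Defs.
From HB Require Import structures.
From mathcomp Require Import all_boot all_order all_algebra zify ring.
Import GRing.Theory.
Local Open Scope ring_scope.

Lemma hess (R : comNzRingType) (n : nat) (a : nat -> nat -> R) (d : nat -> R)
 (h0 : forall i j, (i.+1 < j)%N -> a i j = 0)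
 (h1 : forall i, a i i.+1 = 1)
 (hrel : forall i, \sum_(k < i.+2) (-1)^+k * a i k * d k = 0) :
 d 0%N * \det (\matrix_(i < n.+1, j < n.+1) a i j) = d n.+1.
Proof.
set A := \matrix_(i < n.+1, j < n.+1) a i j.
set w : 'cV_(n.+1) := \col_k ((-1)^+k * d k).
have Aw : A *m w = \col_i (if i == ord_max then - ((-1)^+n.+1 * d n.+1) else 0).
  apply/matrixP => i j; rewrite !mxE.
  under eq_bigr => k _ do rewrite !mxE mulrA [_ * (-1)^+_]mulrC.
  case: eqP => [->|/eqP Hi].
    have := hrel n; rewrite big_ord_recr /= h1 mulr1 => /eqP.
    by rewrite addr_eq0 => /eqP.
  have lti : (i < n)%N by have := ltn_ord i; move: Hi; rewrite -val_eqE /= => /eqP; lia.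
  rewrite -(big_mkord xpredT (fun k => (-1) ^+ k * a i k * d k)).
  rewrite (@big_cat_nat _ _ _ i.+2) //=.
  rewrite big_mkord hrel add0r big1_seq // => k /andP[_]; rewrite mem_index_iota => /andP[hk _].
  by rewrite h0 ?mulr0 ?mul0r.
have E : \adj A *m (A *m w) = \det A *: w by rewrite mulmxA mul_adj_mx mul_scalar_mx.
have := congr1 (fun M : 'cV_(n.+1) => M ord0 ord0) E => /=.
rewrite Aw !mxE big_ord_recr /= big1; last first.
  move=> k _; rewrite mxE; case: eqP => [/(congr1 val)/= hk|_]; last by rewrite mulr0.
  by have := ltn_ord k; rewrite hk ltnn.
rewrite add0r mxE eqxx mxE /cofactor det_trig; last first.
  apply/is_trig_mxP => i j hij; rewrite !mxE lift_max lift0 h0 //.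
rewrite big1; last by move=> i _; rewrite !mxE lift_max lift0 h1.
rewrite expr0 mul1r mulr1 addn0.
move=> H; rewrite mulrC -H.
rewrite mulrN mulrA -exprD.
rewrite /= -signr_odd.
have -> : odd (n + n.+1) by rewrite addnS /= addnn odd_double.
by rewrite expr1 mulN1r opprK.
Qed.



Lemma q1 (i : nat) : (0 < i)%N -> 1 - qq ^+ i != 0.
Proof.
move=> hi; rewrite /qq -rmorphXn -(rmorph1 (@FracField.tofrac _)) -rmorphB.
rewrite tofrac_eq0 subr_eq0; apply/eqP => /(congr1 (fun p : {poly int} => size p)).
rewrite size_poly1 size_polyXn; lia.
Qed.

Lemma q1' : 1 - qq != 0.
Proof. by have := @q1 1 (ltn0Sn 0); rewrite expr1. Qed.

Definition b (n k : nat) : K := qbin qq n k%:Z.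

Lemma den_neq0 k : \prod_(l < k) (1 - qq ^+ l.+1) != 0.
Proof. by apply/prodf_neq0 => l _; apply: q1. Qed.

Lemma b0 n : b n 0 = 1.
Proof. by rewrite /b /qbin /= !big_ord0 divr1. Qed.

Lemma b_gt n k : (n < k)%N -> b n k = 0.
Proof. by move=> h; rewrite /b /qbin /= leqNgt h. Qed.

Lemma alg1 (F : fieldType) (P D x y : F) : x != 0 -> D != 0 ->
  y * P / (D * x) * x = P / D * y.
Proof. by move=> hx hD; field; rewrite hx hD. Qed.

Lemma R1 n k : b n.+1 k.+1 * (1 - qq ^+ k.+1) = b n k * (1 - qq ^+ n.+1).
Proof.
rewrite /b /qbin ltnS.
case: leqP => hk; last by rewrite !mul0r.
rewrite big_ord_recl big_ord_recr /= subn0.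
under eq_bigr => l _ do rewrite /bump leq0n add1n subSS.
by apply: alg1; [exact: q1 | exact: den_neq0].
Qed.

Lemma R2 n k : (k <= n)%N -> b n.+1 k * (1 - qq ^+ (n.+1 - k)) = b n k * (1 - qq ^+ n.+1).
Proof.
move=> hk; rewrite /b /qbin hk (leqW hk).
have E : \prod_(l < k) (1 - qq ^+ (n.+1 - l)) * (1 - qq ^+ (n.+1 - k)) =
   (1 - qq ^+ n.+1) * \prod_(l < k) (1 - qq ^+ (n - l)).
  rewrite -(big_ord_recr k (fun l : 'I_k.+1 => 1 - qq ^+ (n.+1 - l))) big_ord_recl subn0.
  by congr (_ * _); apply: eq_bigr => l _; rewrite /bump leq0n add1n subSS.
by rewrite mulrAC E -mulrA mulrC.
Qed.

Definition cL (M m : nat) : K :=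
  if M == 0%N then (m == 0%N)%:R
  else qq ^+ 'C(m, 2) * b (M - m) m * qint qq M / qint qq (M - m).

Definition Fq N m j := (-1) ^+ j * b N j * cL (N - 2 * j) (m - j).
Definition Tq N m j := if (j < m)%N then
  (-1) ^+ j * qq ^+ 'C(m - j, 2) * b N.-1 j * b (N - m - j).-1 (m - j).-1 else 0.

Lemma divdiv (F : fieldType) (x y w : F) : w != 0 -> (x / w) / (y / w) = x / y.
Proof. by move=> hw; rewrite invf_div mulrA divfK. Qed.

Lemma qintE x y : qint qq x / qint qq y = (1 - qq ^+ x) / (1 - qq ^+ y).
Proof. by rewrite /qint divdiv // q1'. Qed.

Lemma base_alg (F : fieldType) (b1 b2 e x0 x1 x2 x3 : F) :
  b1 * x2 = b2 * x1 -> x2 != 0 -> x1 != 0 -> x3 != 0 ->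
  e * b1 * (x0 / x3) / (x1 / x3) = x0 / x3 / (x2 / x3) * (e * b2).
Proof.
move=> h h2 h1 h3.
have -> : b1 = b2 * x1 / x2 by rewrite -h mulfK.
by field; rewrite h1 h2 h3.
Qed.

Lemma base m' r : let m := m'.+1 in let N := (m + m + r)%N in
  Fq N m 0 = qint qq N / qint qq m * Tq N m 0.
Proof.
move=> m N; rewrite /Fq /Tq /cL ltn0Sn b0 expr0 !mul1r subn0 muln0 subn0.
rewrite subn0 b0 mulr1.
have -> : (N - m = (m' + r).+1)%N by rewrite /N /m; lia.
rewrite /qint.
have h := R1 (m' + r) m'. have hw := q1'.
have hz := @q1 m'.+1 (ltn0Sn _). have hy := @q1 (m' + r).+1 (ltn0Sn _).
move: h hz hy hw; rewrite /m.
move: (b _ m'.+1) (b _ m') (qq ^+ 'C(_, 2)) (1 - qq ^+ N) (1 - qq ^+ (m' + r).+1) (1 - qq ^+ m'.+1) (1 - qq).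
exact: base_alg.
Qed.

Lemma step_alg (F : fieldType) (A S R w B B0 B1 C C0 sg Qc : F) :
  B * (1 - A * S * S * R) = B0 * (1 - A * S * (A * S) * R) ->
  B * (1 - A) = B1 * (1 - A * S * (A * S) * R) ->
  C * (1 - S) = C0 * (1 - S * R) ->
  w != 0 -> 1 - A * S != 0 -> 1 - S * R != 0 -> 1 - S != 0 ->
  1 - A * S * (A * S) * R != 0 ->
  - sg * B * (Qc * C * ((1 - S * S * R) / w) / ((1 - S * R) / w)) =
  (1 - A * S * (A * S) * R) / w / ((1 - A * S) / w) *
  (- sg * Qc * B0 * C0 - sg * (Qc * S) * B1 * C).
Proof.
move=> h1 h2 h3 hw hm hsr hs hN.
have -> : B0 = B * (1 - A * S * S * R) / (1 - A * S * (A * S) * R) by rewrite h1 mulfK.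
have -> : B1 = B * (1 - A) / (1 - A * S * (A * S) * R) by rewrite h2 mulfK.
have -> : C0 = C * (1 - S) / (1 - S * R) by rewrite h3 mulfK.
by field; rewrite hw hm hsr hN.
Qed.

Lemma s0_alg (F : fieldType) (B B1 sg x y w : F) :
  B * (1 - y) = B1 * x -> 1 - y != 0 -> w != 0 -> x != 0 ->
  - sg * B = x / w / ((1 - y) / w) * (0 - sg * B1).
Proof.
move=> h1 hy hw hx.
have -> : B1 = B * (1 - y) / x by rewrite h1 mulfK.
by field; rewrite hy hw hx.
Qed.

Lemma step a s r : let m := (a.+1 + s)%N in let N := (m + m + r)%N in
  Fq N m a.+1 = qint qq N / qint qq m * (Tq N m a.+1 - Tq N m a).
Proof.
move=> m N; rewrite /Fq /Tq /cL.
have -> : (a < m)%N by rewrite /m; lia.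
have -> : (N - 2 * a.+1 = s + s + r)%N by rewrite /N /m; lia.
have -> : (m - a.+1 = s)%N by rewrite /m; lia.
have -> : (m - a = s.+1)%N by rewrite /m; lia.
have -> : (N - m - a = (s + r).+1)%N by rewrite /N /m; lia.
have -> : (N - m - a.+1 = s + r)%N by rewrite /N /m; lia.
have -> : (s + s + r - s = s + r)%N by lia.
have eN : N = (N.-1).+1 by rewrite /N /m; lia.
have hle : (a.+1 <= N.-1)%N by rewrite /N /m; lia.
have hR2 := @R2 N.-1 a.+1 hle.
have hR1 := R1 N.-1 a.
rewrite -eN in hR1 hR2.
have e2 : (N - a.+1 = a.+1 + s + s + r)%N by rewrite /N /m; lia.
rewrite e2 in hR2.
rewrite /qint exprS mulN1r.
have hm : m = (a.+1 + s)%N by [].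
have hN : N = (m + m + r)%N by [].
clearbody m N.
move: hm hN eN hR2 hR1 hle e2.
case: s => [|s'] hm hN eN hR2 hR1 hle e2.
  have -> : (a.+1 < m)%N = false by rewrite hm; lia.
  rewrite !addn0 /= !add0n b0 !mulr1 expr0 mul1r.
  have -> : (if r == 0%N then 1 else (1 - qq ^+ r) / (1 - qq) / ((1 - qq ^+ r) / (1 - qq))) = 1 :> K.
    case: r {hN hR2 e2} => [//|r]; rewrite /= divff //; apply: mulf_neq0; [exact: q1|].
    by rewrite invr_eq0; exact: q1'.
  rewrite hm addn0 in hN *.
  have n5 : 1 - qq ^+ N != 0 by apply: q1; rewrite hN.
  move: hR1 (@q1 a.+1 (ltn0Sn _)) q1' n5.
  move: (b N a.+1) (b N.-1 a) ((-1) ^+ a : K) (1 - qq ^+ N) (qq ^+ a.+1) (1 - qq).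
  move=> B B1 sg x y w; rewrite mulr1; exact: s0_alg.
have -> : (a.+1 < m)%N by rewrite hm; lia.
rewrite !addSn /=.
have hC := R1 (s' + r) s'.
have eC : qq ^+ 'C(s'.+2, 2) = qq ^+ 'C(s'.+1, 2) * qq ^+ s'.+1.
  by rewrite -exprD binS bin1.
have E1 : qq ^+ (a.+1 + s'.+1 + s'.+1 + r) = qq ^+ a.+1 * qq ^+ s'.+1 * qq ^+ s'.+1 * qq ^+ r by rewrite !exprD.
have E2 : qq ^+ N = qq ^+ a.+1 * qq ^+ s'.+1 * (qq ^+ a.+1 * qq ^+ s'.+1) * qq ^+ r by rewrite hN hm !exprD.
have E3 : qq ^+ (s' + r).+1 = qq ^+ s'.+1 * qq ^+ r by rewrite -exprD addSn.
have E4 : qq ^+ (s' + s'.+1 + r).+1 = qq ^+ s'.+1 * qq ^+ s'.+1 * qq ^+ r by rewrite -!exprD; congr (_ ^+ _); lia.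
have E5 : qq ^+ m = qq ^+ a.+1 * qq ^+ s'.+1 by rewrite hm exprD.
have n1 := q1'.
have n2 : 1 - qq ^+ m != 0 by apply: q1; rewrite hm.
have n3 : 1 - qq ^+ (s' + r).+1 != 0 by apply: q1.
have n4 : 1 - qq ^+ s'.+1 != 0 by apply: q1.
have n5 : 1 - qq ^+ N != 0 by apply: q1; rewrite hN hm.
rewrite eC.
rewrite E1 in hR2. rewrite E2 in hR2 hR1 n5 *. rewrite E3 in hC n3 *. rewrite E4 E5. rewrite E5 in n2.
move: hR2 hR1 hC n1 n2 n3 n4 n5.
move: (b N a.+1) (b N.-1 a.+1) (b N.-1 a) (b (s'+r).+1 s'.+1) (b (s'+r) s') ((-1)^+a : K) (qq ^+ 'C(s'.+1, 2)).
move: (qq ^+ a.+1) (qq ^+ s'.+1) (qq ^+ r) (1 - qq).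
move=> A S R w B B0 B1 C C0 sg Qc; exact: step_alg.
Qed.

Lemma qsum m r : (1 <= m)%N -> \sum_(j < m.+1) Fq (m + m + r) m j = 0.
Proof.
move=> hm.
have H : forall k, (k <= m)%N ->
    \sum_(j < k.+1) Fq (m + m + r) m j = qint qq (m + m + r) / qint qq m * Tq (m + m + r) m k.
  elim=> [|k IH] hk.
    rewrite big_ord1; case: m hm hk => [//|m'] _ _; exact: base.
  rewrite big_ord_recr /= IH ?(ltnW hk) //.
  have em : m = (k.+1 + (m - k.+1))%N by lia.
  have := step k (m - k.+1) r; rewrite /= -em => ->.
  by rewrite mulrBr addrC subrK.
by rewrite H // /Tq ltnn mulr0.
Qed.

Lemma tri (V : nmodType) (f : nat -> nat -> V) n :
  \sum_(j < n.+1) \sum_(m < (n - j)%N.+1) f j m = \sum_(t < n.+1) \sum_(j < t.+1) f j (t - j)%N.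
Proof.
elim: n => [|n IH]; first by rewrite !big_ord1.
rewrite big_ord_recr [RHS]big_ord_recr [X in _ = _ + X]big_ord_recr /= -IH.
rewrite (_ : (n.+1 - n.+1 = 0)%N); last exact: subnn.
rewrite big_ord1.
rewrite (eq_bigr (fun j : 'I_n.+1 => \sum_(m < (n - j)%N.+1) f j m + f j (n.+1 - j)%N)); last first.
  move=> j _; rewrite subSn; last by have := ltn_ord j.
  by rewrite big_ord_recr /= -subSn //; have := ltn_ord j.
by rewrite big_split /= addrA.
Qed.

Definition Lp (M : nat) : {poly K} := \sum_(m < M./2.+1) cL M m *: 'X^(M - 2 * m).

Lemma Lp_Luc M : (0 < M)%N -> Lp M = Luc M.
Proof.
case: M => // M _; rewrite /Lp /Luc; apply: eq_bigr => m _; by rewrite /cL.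
Qed.

Lemma Lp0 : Lp 0 = 1.
Proof. by rewrite /Lp big_ord1 /cL /= scale1r expr0. Qed.

Lemma qint_neq0 N : (0 < N)%N -> qint qq N != 0.
Proof. by move=> hN; rewrite /qint mulf_neq0 ?invr_eq0 ?q1 ?q1'. Qed.

Lemma Fq00 N : Fq N 0 0 = 1.
Proof.
rewrite /Fq expr0 b0 !mul1r muln0 !subn0 /cL.
case: N => [//|N] /=; rewrite expr0 mul1r subn0 b0 mul1r divff //.
exact: qint_neq0.
Qed.

Lemma qsum' m N : (1 <= m)%N -> (2 * m <= N)%N -> \sum_(j < m.+1) Fq N m j = 0.
Proof.
move=> h1 h2; have := @qsum m (N - 2 * m) h1.
by have -> : (m + m + (N - 2 * m) = N)%N by lia.
Qed.

Lemma polyid n e : (e <= 1)%N ->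
  \sum_(j < n.+1) ((-1) ^+ j * b (n + n + e) j) *: Lp (n + n + e - 2 * j) = 'X^(n + n + e).
Proof.
move=> he.
set N := (n + n + e)%N.
have step1 : forall j : 'I_n.+1, ((-1) ^+ j * b N j) *: Lp (N - 2 * j) =
    \sum_(m < (n - j)%N.+1) (((-1) ^+ j * b N j) * cL (N - 2 * j) m) *: 'X^(N - 2 * (j + m)).
  move=> j; rewrite /Lp.
  have -> : (N - 2 * j)./2 = (n - j)%N.
    have -> : (N - 2 * j = (n - j) + (n - j) + e)%N by have := ltn_ord j; rewrite /N; lia.
    rewrite addnn.
    case: e he {N} => [|[|//]] _; first by rewrite addn0 doubleK.
    by rewrite addn1 /= uphalf_double.
  rewrite scaler_sumr; apply: eq_bigr => m _; rewrite scalerA; congr (_ *: 'X^_); lia.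
rewrite (eq_bigr _ (fun j _ => step1 j)).
rewrite (@tri _ (fun j m => (((-1) ^+ j * b N j) * cL (N - 2 * j) m) *: 'X^(N - 2 * (j + m)))).
rewrite (eq_bigr (fun t : 'I_n.+1 => (\sum_(j < t.+1) Fq N t j) *: 'X^(N - 2 * t))); last first.
  move=> t _; rewrite scaler_suml; apply: eq_bigr => j _.
  by rewrite /Fq; congr (_ *: 'X^_); have := ltn_ord j; lia.
rewrite big_ord_recl big_ord1 Fq00 scale1r muln0 subn0 big1 ?addr0 //.
move=> i _; rewrite qsum' ?scale0r //.
by have := ltn_ord i; rewrite lift0 /N; lia.
Qed.

Lemma qbin_neg m (i j : nat) : (i < j)%N -> qbin qq m (i%:Z - j%:Z) = 0.
Proof.
move=> hij; have -> : i%:Z - j%:Z = Negz (j - i).-1.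
  rewrite NegzE prednK ?subn_gt0 //; lia.
by [].
Qed.

Lemma qbin_pos m (i j : nat) : (j <= i)%N -> qbin qq m (i%:Z - j%:Z) = b m (i - j).
Proof. by move=> hij; rewrite /b; congr qbin; lia. Qed.

Lemma sign_sub (R : pzRingType) (M k : nat) : (k <= M)%N ->
  (-1) ^+ (M - k) = (-1) ^+ M * (-1) ^+ k :> R.
Proof.
move=> hk; have eM : M = (M - k + k)%N by rewrite subnK.
by rewrite {2}eM exprD -mulrA -exprD addnn -mul2n exprM sqrrN !expr1n mulr1.
Qed.

Lemma rev_sum e M : (e <= 1)%N ->
  \sum_(k < M.+1) (-1) ^+ k * (qbin qq (M + M + e) (M%:Z - k%:Z))%:P * Lp (k + k + e)
  = (-1) ^+ M * 'X^(M + M + e).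
Proof.
move=> he; rewrite -polyid // big_distrr /= (reindex_inj rev_ord_inj) /=.
apply: eq_bigr => k _.
have hk : (k <= M)%N by rewrite -ltnS.
rewrite subSS qbin_pos; last by lia.
have -> : (M - (M - k) = k)%N by lia.
have -> : (M - k + (M - k) + e = M + M + e - 2 * k)%N by lia.
have -> : (-1) ^+ (M - k) = (-1) ^+ M * (-1) ^+ k :> {poly K}.
  exact: sign_sub.
rewrite -!mulrA; congr (_ * _).
by rewrite -mul_polyC rmorphM rmorphXn rmorphN1 mulrA.
Qed.

Definition ae e i j : {poly K} :=
  (qbin qq (i + i + e) (i%:Z - j%:Z))%:P * 'X^2 +
  (qbin qq (i.+1 + i.+1 + e) ((i.+1)%:Z - j%:Z))%:P.

Lemma dist (R : comNzRingType) (s A X L B : R) :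
  s * (A * X + B) * L = X * (s * A * L) + s * B * L.
Proof. by ring. Qed.

Lemma main_gen e n' : (e <= 1)%N ->
  Lp e * \det (\matrix_(i < n'.+1, j < n'.+1) ae e i j) = Lp (n'.+1 + n'.+1 + e).
Proof.
move=> he.
apply: (@hess _ n' (ae e) (fun k => Lp (k + k + e))).
- move=> i j hij; rewrite /ae !qbin_neg ?polyC0 ?mul0r ?addr0 //; lia.
- move=> i; rewrite /ae qbin_neg // qbin_pos // subnn polyC0 mul0r add0r.
  by rewrite /b /qbin /= !big_ord0 divr1.
- move=> i.
  under eq_bigr => k _ do rewrite /ae dist.
  rewrite big_split /=.
  rewrite -big_distrr /=.
  rewrite [X in 'X^2 * X]big_ord_recr.
  rewrite (@qbin_neg _ i i.+1) //.
  rewrite polyC0 mulr0 mul0r.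
  rewrite /= addr0 !rev_sum //.
  have -> : 'X^(i.+1 + i.+1 + e) = 'X^2 * 'X^(i + i + e) :> {poly K}.
    by rewrite -exprD; congr (_ ^+ _); lia.
  by rewrite [(-1) ^+ i.+1]exprS mulN1r mulrCA mulNr addrN.
Qed.

Lemma Lp1 : Lp 1 = 'X.
Proof.
rewrite /Lp big_ord1 /cL.
have -> : (1 == 0)%N = false by [].
rewrite expr0 mul1r subn0 b0 mul1r divff ?scale1r ?expr1 //.
exact: qint_neq0.
Qed.


Theorem proposition7 (n : nat) (hn : (1 <= n)%N) :
  \det (matA n) = Luc (2 * n) /\ 'X * \det (matB n) = Luc (2 * n + 1).
Proof.
case: n hn => [//|n'] _; split.
  have := @main_gen 0 n' (leq0n 1).
  rewrite Lp0 mul1r Lp_Luc; last by lia.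
  have -> : (n'.+1 + n'.+1 + 0 = 2 * n'.+1)%N by lia.
  move=> <-.
  have E : matA n'.+1 = \matrix_(i, j) ae 0 i j.
    rewrite /matA /ae; apply: eq_mx => i j.
    have -> : (2 * i + 2 = i.+1 + i.+1 + 0)%N by lia.
    have -> : (2 * i = i + i + 0)%N by lia.
    have -> : (i%:Z + 1 - j%:Z = (i.+1)%:Z - j%:Z) by lia.
    by [].
  by rewrite E.
have := @main_gen 1 n' (leqnn 1); rewrite Lp1 Lp_Luc; last by lia.
have -> : (n'.+1 + n'.+1 + 1 = 2 * n'.+1 + 1)%N by lia.
move=> <-.
have E : matB n'.+1 = \matrix_(i, j) ae 1 i j.
  rewrite /matB /ae; apply: eq_mx => i j.
  have -> : (2 * i + 3 = i.+1 + i.+1 + 1)%N by lia.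
  have -> : (2 * i + 1 = i + i + 1)%N by lia.
  have -> : (i%:Z + 1 - j%:Z = (i.+1)%:Z - j%:Z) by lia.
  by [].
by rewrite E.
Qed.
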